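(* Let $(\mathbb R^4,g)$ be the pp-wave $g=-(x^2+y^2)\,du^2+2\,du\,dv+dx^2+dy^2$ in coordinates $(u,v,x,y)$, and let $Z:=\tfrac12(H+k^2+h^2)\partial_v-\partial_u+k\partial_x+h\partial_y$ with $H=-x^2-y^2$, $k=-y$, $h=x$ (so $Z=-\partial_u-y\partial_x+x\partial_y$). Then $(\mathbb R^4,g,Z,\nabla u)$ is admissible (with $\nabla u=\partial_v$, $\tau=u$, $\ell=1$, and orientation such that $J=J_{g,Z,\nabla u}$ satisfies $JX=Y$ for $X:=k\partial_v+\partial_x$, $Y:=h\partial_v+\partial_y$), and the induced tensor $g_K=d(e^uZ^\flat)(\cdot,J\cdot)$ is a Kähler metric on all of $\mathbb R^4$.
   Context: Admissibility: an oriented semi-Riemannian $4$-manifold $(M,g)$ with vector fields $k_+,k_-$ (here $k_+=Z$, $k_-=\nabla u$) is admissible if $k_\pm$ are pointwise linearly independent, $\mathcal V:=\mathrm{span}(k_+,k_-)$ has spacelike orthogonal complement $\mathcal H$, and, with $J=J_{g,k_+,k_-}$ defined by $Jk_+=k_-$, $Jk_-=-k_+$, $Je_1=e_2$, $Je_2=-e_1$ for positively oriented orthonormal frames $(e_1,e_2)$ of $\mathcal H$: $[k_\pm,\Gamma(\mathcal H)]\subset\Gamma(\mathcal H)$; $J\circ\nabla^ok_+=\nabla^ok_-$ on $\mathcal H$, where $\nabla^oX$ is the trace-free symmetric part of $\mathcal H\to\mathcal H$, $v\mapsto(\nabla_vX)^{\mathcal H}$; $k_-=\ell\nabla\tau$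 for smooth $\ell,\tau$; and $\nabla(g(k_+,k_-))$, $\nabla(g(k_+,k_+))$ take values in $\mathcal V$. $Z^\flat=g(Z,\cdot)$. The induced metric $g_K:=d(f(\tau)k_+^\flat)(\cdot,J\cdot)$ is Kähler where $f\iota<0$ and $f'G/\ell-f\,dk_+^\flat(k_+,k_-)<0$, with $\iota=g(k_+,[e_1,e_2])$ and $G=g(k_+,k_+)g(k_-,k_-)-g(k_+,k_-)^2$. *)

(* Defs.v *)
(* classical reals. Everything is done concretely on R^4 with
   global coordinates indexed 0,1,2,3 = (u,v,x,y). *)
From Stdlib Require Import Reals Lra ClassicalEpsilon.
Open Scope R_scope.

(* Points and tangent vectors of R^4: only the indices 0..3 are meaningful. *)
Definition Vec := nat -> R.
Definition Field := Vec -> Vec.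
Definition Metric := Vec -> nat -> nat -> R.
Definition Mat := nat -> nat -> R.

Definition sum4 (f : nat -> R) : R := f 0%nat + f 1%nat + f 2%nat + f 3%nat.
Definition sum2 (f : nat -> R) : R := f 0%nat + f 1%nat.
Definition veq (a b : Vec) : Prop := forall i, (i < 4)%nat -> a i = b i.
Definition vzero : Vec := fun _ => 0.
Definition vopp (a : Vec) : Vec := fun i => - a i.
Definition vsub (a b : Vec) : Vec := fun i => a i - b i.
Definition nonzero (a : Vec) : Prop := exists i, (i < 4)%nat /\ a i <> 0.
Definition coord (i : nat) : Vec -> R := fun p => p i.
Definition basis (i : nat) : Vec := fun j => if Nat.eqb j i then 1 else 0.

Definition shift (p : Vec) (i : nat) (t : R) : Vec :=
  fun j => if Nat.eqb j i then p j + t else p j.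
Definition has_pd (f : Vec -> R) (i : nat) (p : Vec) (l : R) : Prop :=
  derivable_pt_lim (fun t => f (shift p i t)) 0 l.
Definition pd (f : Vec -> R) (i : nat) (p : Vec) : R :=
  epsilon (inhabits 0) (fun l => has_pd f i p l).
Definition cont_at (f : Vec -> R) (p : Vec) : Prop :=
  forall eps, 0 < eps -> exists delta, 0 < delta /\
    forall q, (forall i, (i < 4)%nat -> Rabs (q i - p i) < delta) ->
      Rabs (f q - f p) < eps.
CoInductive smooth (f : Vec -> R) : Prop :=
  smooth_intro :
    (forall p, cont_at f p) ->
    (forall i p, (i < 4)%nat -> exists l, has_pd f i p l) ->
    (forall i, (i < 4)%nat -> smooth (pd f i)) -> smooth f.
Definition smooth_field (X : Field) : Prop :=
  forall i, (i < 4)%nat -> smooth (fun p => X p i).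

Definition bracket (X Y : Field) : Field := fun p m =>
  sum4 (fun i => X p i * pd (fun q => Y q m) i p - Y p i * pd (fun q => X q m) i p).

Definition det3 (r1 r2 r3 : nat) (b c d : Vec) : R :=
  b r1 * (c r2 * d r3 - c r3 * d r2) - b r2 * (c r1 * d r3 - c r3 * d r1)
  + b r3 * (c r1 * d r2 - c r2 * d r1).
Definition det4 (a b c d : Vec) : R :=
  a 0%nat * det3 1 2 3 b c d - a 1%nat * det3 0 2 3 b c d
  + a 2%nat * det3 0 1 3 b c d - a 3%nat * det3 0 1 2 b c d.

Definition gdot (g : Metric) (p a b : Vec) : R :=
  sum4 (fun i => sum4 (fun j => g p i j * a i * b j)).
Definition semi_riemannian (g : Metric) : Prop :=
  (forall p i j, g p i j = g p j i) /\
  (forall p, det4 (fun i => g p i 0%nat) (fun i => g p i 1%nat)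
                  (fun i => g p i 2%nat) (fun i => g p i 3%nat) <> 0) /\
  (forall i j, (i < 4)%nat -> (j < 4)%nat -> smooth (fun p => g p i j)).
Definition raise (g : Metric) (p : Vec) (a : nat -> R) : Vec :=
  epsilon (inhabits vzero)
    (fun w => forall k, (k < 4)%nat -> sum4 (fun j => g p j k * w j) = a k).
Definition grad (g : Metric) (f : Vec -> R) (p : Vec) : Vec :=
  raise g p (fun k => pd f k p).
Definition chr1 (g : Metric) (p : Vec) (k i j : nat) : R :=
  / 2 * (pd (fun q => g q j k) i p + pd (fun q => g q i k) j p
         - pd (fun q => g q i j) k p).
Definition nabla (g : Metric) (v : Vec) (X : Field) (p : Vec) : Vec :=
  raise g p (fun k => sum4 (fun i => sum4 (fun j =>
     v i * pd (fun q => X q j) i p * g p j k + chr1 g p k i j * v i * X p j))).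

Definition lin_indep (a b : Vec) : Prop :=
  forall s t, (forall i, (i < 4)%nat -> s * a i + t * b i = 0) -> s = 0 /\ t = 0.
Definition inV (kp km : Field) (p w : Vec) : Prop :=
  exists a b, veq w (fun i => a * kp p i + b * km p i).
Definition inH (g : Metric) (kp km : Field) (p w : Vec) : Prop :=
  gdot g p (kp p) w = 0 /\ gdot g p (km p) w = 0.
Definition ON_frame (g : Metric) (kp km : Field) (p e1 e2 : Vec) : Prop :=
  inH g kp km p e1 /\ inH g kp km p e2 /\
  gdot g p e1 e1 = 1 /\ gdot g p e2 e2 = 1 /\ gdot g p e1 e2 = 0.
(* orientation of R^4 given by a sign o (o = 1: standard); the orientation of
   H is the one for which (k+,k-,e1,e2) is positively oriented *)
Definition pos_frame (o : R) (kp km : Field) (p e1 e2 : Vec) : Prop :=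
  0 < o * det4 (kp p) (km p) e1 e2.
Definition Japply (M : Mat) (w : Vec) : Vec := fun i => sum4 (fun j => M i j * w j).
Definition Jprop (o : R) (g : Metric) (kp km : Field) (p : Vec) (M : Mat) : Prop :=
  veq (Japply M (kp p)) (km p) /\ veq (Japply M (km p)) (vopp (kp p)) /\
  forall e1 e2, ON_frame g kp km p e1 e2 -> pos_frame o kp km p e1 e2 ->
    veq (Japply M e1) e2 /\ veq (Japply M e2) (vopp e1).
Definition Jmat (o : R) (g : Metric) (kp km : Field) (p : Vec) : Mat :=
  epsilon (inhabits (fun _ _ => 0)) (Jprop o g kp km p).
(* nabla^o X applied to v in H_p, computed in an ON frame (e1,e2) of H_p
   (trace-free symmetric part of v |-> (nabla_v X)^H) *)
Definition nabla0 (g : Metric) (X : Field) (p e1 e2 v : Vec) : Vec :=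
  let e := fun a : nat => if Nat.eqb a 0 then e1 else e2 in
  let A := fun a b : nat => gdot g p (nabla g (e b) X p) (e a) in
  let S := fun a b : nat => (A a b + A b a) / 2
             - (if Nat.eqb a b then (A 0%nat 0%nat + A 1%nat 1%nat) / 2 else 0) in
  fun i => sum2 (fun a => sum2 (fun b => S a b * gdot g p v (e b) * e a i)).

Definition admissible (o : R) (g : Metric) (kp km : Field) : Prop :=
  semi_riemannian g /\ smooth_field kp /\ smooth_field km /\
  (forall p, lin_indep (kp p) (km p)) /\
  (forall p w, inH g kp km p w -> nonzero w -> 0 < gdot g p w w) /\
  (forall X, smooth_field X -> (forall p, inH g kp km p (X p)) ->
     forall p, inH g kp km p (bracket kp X p) /\ inH g kp km p (bracket km X p)) /\
  (forall p e1 e2 v, ON_frame g kp km p e1 e2 -> inH g kp km p v ->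
     veq (Japply (Jmat o g kp km p) (nabla0 g kp p e1 e2 v)) (nabla0 g km p e1 e2 v)) /\
  (exists l tau : Vec -> R, smooth l /\ smooth tau /\
     forall p, veq (km p) (fun i => l p * grad g tau p i)) /\
  (forall p, inV kp km p (grad g (fun q => gdot g q (kp q) (km q)) p)) /\
  (forall p, inV kp km p (grad g (fun q => gdot g q (kp q) (kp q)) p)).

Definition alpha (f : R -> R) (tau : Vec -> R) (g : Metric) (kp : Field)
  (p : Vec) (j : nat) : R := f (tau p) * sum4 (fun i => g p i j * kp p i).
Definition dform (a : Vec -> nat -> R) (p x y : Vec) : R :=
  sum4 (fun i => sum4 (fun j =>
    (pd (fun q => a q j) i p - pd (fun q => a q i) j p) * x i * y j)).
Definition gK (o : R) (g : Metric) (kp km : Field) (f : R -> R) (tau : Vec -> R)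
  (p x y : Vec) : R :=
  dform (alpha f tau g kp) p x (Japply (Jmat o g kp km p) y).

Definition JF (J : Vec -> Mat) (X : Field) : Field := fun q => Japply (J q) (X q).
Definition nijenhuis (J : Vec -> Mat) (X Y : Field) : Field := fun p =>
  vsub (vsub (vsub (bracket (JF J X) (JF J Y) p) (JF J (bracket (JF J X) Y) p))
             (JF J (bracket X (JF J Y)) p)) (bracket X Y p).
Definition kahler (J : Vec -> Mat) (h : Vec -> Vec -> Vec -> R) : Prop :=
  (forall i j, (i < 4)%nat -> (j < 4)%nat -> smooth (fun p => J p i j)) /\
  (forall p w, veq (Japply (J p) (Japply (J p) w)) (vopp w)) /\
  (forall a b : Vec, forall p, veq (nijenhuis J (fun _ => a) (fun _ => b) p) vzero) /\
  (forall p a b, h p a b = sum4 (fun i => sum4 (fun j =>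
       a i * b j * h p (basis i) (basis j)))) /\
  (forall i j, (i < 4)%nat -> (j < 4)%nat -> smooth (fun p => h p (basis i) (basis j))) /\
  (forall p a b, h p a b = h p b a) /\
  (forall p a, nonzero a -> 0 < h p a a) /\
  (forall p a b, h p (Japply (J p) a) (Japply (J p) b) = h p a b) /\
  (let om := fun p i j => h p (Japply (J p) (basis i)) (basis j) in
   forall p i j k, (i < 4)%nat -> (j < 4)%nat -> (k < 4)%nat ->
     pd (fun q => om q j k) i p + pd (fun q => om q k i) j p
     + pd (fun q => om q i j) k p = 0).

Definition ppwave : Metric := fun p i j =>
  match i, j with
  | O, O => - (p 2%nat ^ 2 + p 3%nat ^ 2)
  | O, S O | S O, O => 1
  | S (S O), S (S O) | S (S (S O)), S (S (S O)) => 1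
  | _, _ => 0
  end.
Definition Hf (p : Vec) : R := - p 2%nat ^ 2 - p 3%nat ^ 2.
Definition kf (p : Vec) : R := - p 3%nat.
Definition hf (p : Vec) : R := p 2%nat.
Definition Zf : Field := fun p i =>
  match i with
  | O => -1
  | S O => / 2 * (Hf p + kf p ^ 2 + hf p ^ 2)
  | S (S O) => kf p
  | S (S (S O)) => hf p
  | _ => 0
  end.
Definition Xf : Field := fun p i =>
  match i with S O => kf p | S (S O) => 1 | _ => 0 end.
Definition Yf : Field := fun p i =>
  match i with S O => hf p | S (S (S O)) => 1 | _ => 0 end.

(* Main.v *)
Require Import Defs.
From Stdlib Require Import Reals Lra Lia Bool ClassicalEpsilon FunctionalExtensionality.
Open Scope R_scope.


Lemma pd_eq f i p l : has_pd f i p l -> pd f i p = l.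
Proof.
  intro H. unfold pd.
  assert (Hex : exists l, has_pd f i p l) by (exists l; exact H).
  pose proof (epsilon_spec (inhabits 0) (fun l => has_pd f i p l) Hex) as Hs.
  exact (uniqueness_limite _ _ _ _ Hs H).
Qed.

Lemma pd_ext f g i p : (forall q, f q = g q) -> pd f i p = pd g i p.
Proof. intro H. f_equal. apply functional_extensionality. exact H. Qed.

Lemma shift0 p i : shift p i 0 = p.
Proof. apply functional_extensionality. intro j. unfold shift.
  destruct (Nat.eqb j i); ring. Qed.

Lemma has_pd_plus f g i p a b : has_pd f i p a -> has_pd g i p b ->
  has_pd (fun q => f q + g q) i p (a + b).
Proof. unfold has_pd. intros. apply (derivable_pt_lim_plus (fun t => f (shift p i t)) (fun t => g (shift p i t))); auto. Qed.

Lemma has_pd_mult f g i p a b : has_pd f i p a -> has_pd g i p b ->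
  has_pd (fun q => f q * g q) i p (a * g p + f p * b).
Proof. unfold has_pd. intros.
  pose proof (derivable_pt_lim_mult (fun t => f (shift p i t)) (fun t => g (shift p i t)) 0 a b H H0) as K.
  cbv beta in K; rewrite shift0 in K. exact K. Qed.

Lemma has_pd_opp f i p a : has_pd f i p a -> has_pd (fun q => - f q) i p (- a).
Proof. unfold has_pd. intros.
  apply (derivable_pt_lim_opp (fun t => f (shift p i t))); auto. Qed.

Lemma has_pd_const c i p : has_pd (fun _ => c) i p 0.
Proof. unfold has_pd. apply (derivable_pt_lim_const c). Qed.

Lemma has_pd_coord n i p : has_pd (fun q => q n) i p (if Nat.eqb n i then 1 else 0).
Proof. unfold has_pd, shift. destruct (Nat.eqb n i).
  - replace 1 with (0 + 1) by ring.
    apply (derivable_pt_lim_plus (fct_cte (p n)) id). apply derivable_pt_lim_const.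
    apply derivable_pt_lim_id.
  - apply (derivable_pt_lim_const (p n)). Qed.

Lemma has_pd_exp f i p a : has_pd f i p a -> has_pd (fun q => exp (f q)) i p (exp (f p) * a).
Proof. unfold has_pd. intros.
  pose proof (derivable_pt_lim_comp (fun t => f (shift p i t)) exp 0 a (exp (f p)) H) as K.
  cbv beta in K; rewrite shift0 in K. apply K. apply derivable_pt_lim_exp. Qed.

Inductive E := Cst (r : R) | Var (n : nat) | Add (a b : E) | Mul (a b : E) | Opp (a : E) | Ex (a : E).
Fixpoint eval (e : E) (p : Vec) : R :=
  match e with
  | Cst r => r | Var n => p n | Add a b => eval a p + eval b p
  | Mul a b => eval a p * eval b p | Opp a => - eval a p | Ex a => exp (eval a p) end.
Fixpoint deriv (e : E) (i : nat) : E :=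
  match e with
  | Cst _ => Cst 0 | Var n => Cst (if Nat.eqb n i then 1 else 0)
  | Add a b => Add (deriv a i) (deriv b i)
  | Mul a b => Add (Mul (deriv a i) b) (Mul a (deriv b i))
  | Opp a => Opp (deriv a i)
  | Ex a => Mul (Ex a) (deriv a i) end.
Fixpoint wfb (e : E) : bool :=
  match e with
  | Cst _ => true | Var n => Nat.ltb n 4 | Add a b | Mul a b => wfb a && wfb b
  | Opp a | Ex a => wfb a end.

Lemma has_pd_eval e i p : has_pd (eval e) i p (eval (deriv e i) p).
Proof.
  induction e; simpl.
  - apply has_pd_const.
  - apply has_pd_coord.
  - apply has_pd_plus; auto.
  - apply has_pd_mult; auto.
  - apply has_pd_opp; auto.
  - apply has_pd_exp; auto.
Qed.

Lemma pd_eval e i p : pd (eval e) i p = eval (deriv e i) p.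
Proof. apply pd_eq, has_pd_eval. Qed.

Lemma pd_eval_ext f e i p : (forall q, f q = eval e q) -> pd f i p = eval (deriv e i) p.
Proof. intro H. rewrite (pd_ext f (eval e)) by exact H. apply pd_eval. Qed.

Lemma wfb_deriv e i : wfb e = true -> wfb (deriv e i) = true.
Proof. induction e; simpl; intro H; auto.
  - apply andb_true_iff in H as [H1 H2]. rewrite IHe1, IHe2 by auto. reflexivity.
  - apply andb_true_iff in H as [H1 H2]. rewrite IHe1, IHe2, H1, H2 by auto. reflexivity.
  - rewrite H, IHe; auto. Qed.

Lemma cont_comp2 (h : R -> R -> R) f g p :
  cont_at f p -> cont_at g p ->
  (forall eps, 0 < eps -> exists d, 0 < d /\ forall a b, Rabs (a - f p) < d -> Rabs (b - g p) < d ->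
     Rabs (h a b - h (f p) (g p)) < eps) ->
  cont_at (fun q => h (f q) (g q)) p.
Proof.
  intros Hf Hg Hh eps He. destruct (Hh eps He) as [d [Hd Hd2]].
  destruct (Hf d Hd) as [d1 [Hd1 H1]]. destruct (Hg d Hd) as [d2 [Hd2' H2]].
  exists (Rmin d1 d2). split. apply Rmin_pos; auto.
  intros q Hq. apply Hd2.
  - apply H1. intros i Hi. specialize (Hq i Hi). pose proof (Rmin_l d1 d2). lra.
  - apply H2. intros i Hi. specialize (Hq i Hi). pose proof (Rmin_r d1 d2). lra.
Qed.

Lemma cont_comp1 (h : R -> R) f p :
  cont_at f p -> continuity_pt h (f p) -> cont_at (fun q => h (f q)) p.
Proof.
  intros Hf Hh eps He. destruct (Hh eps He) as [d [Hd Hd2]].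
  destruct (Hf d Hd) as [d1 [Hd1 H1]]. exists d1. split; auto.
  intros q Hq. specialize (H1 q Hq).
  destruct (Req_dec (f q) (f p)) as [E|E].
  - rewrite E. unfold Rminus. rewrite Rplus_opp_r, Rabs_R0. exact He.
  - apply (Hd2 (f q)). split. unfold D_x, no_cond. split; auto.
    unfold R_dist. simpl. exact H1.
Qed.

Lemma mult_cont2 a0 b0 eps : 0 < eps -> exists d, 0 < d /\ forall a b,
  Rabs (a - a0) < d -> Rabs (b - b0) < d -> Rabs (a * b - a0 * b0) < eps.
Proof.
  intros He. set (K := Rabs a0 + Rabs b0 + 1).
  assert (HK : 0 < K) by (unfold K; pose proof (Rabs_pos a0); pose proof (Rabs_pos b0); lra).
  exists (Rmin 1 (eps / K)). split. apply Rmin_pos. lra. unfold Rdiv. apply Rmult_lt_0_compat; auto. apply Rinv_0_lt_compat; auto.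
  intros a b Ha Hb. set (d := Rmin 1 (eps / K)) in *.
  assert (d1 : d <= 1) by apply Rmin_l.
  assert (d2 : d * K <= eps).
  { assert (d <= eps / K) by apply Rmin_r.
    replace eps with (eps / K * K) by (field; lra). apply Rmult_le_compat_r; lra. }
  replace (a * b - a0 * b0) with ((a - a0) * (b - b0) + a0 * (b - b0) + b0 * (a - a0)) by ring.
  set (A := a - a0) in *. set (B := b - b0) in *.
  pose proof (Rabs_triang (A * B + a0 * B) (b0 * A)).
  pose proof (Rabs_triang (A * B) (a0 * B)).
  rewrite !Rabs_mult in *.
  pose proof (Rabs_pos A). pose proof (Rabs_pos B). pose proof (Rabs_pos a0). pose proof (Rabs_pos b0).
  assert (Rabs A * Rabs B <= Rabs A) by nra.
  assert (Rabs a0 * Rabs B <= Rabs a0 * d) by nra.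
  assert (Rabs b0 * Rabs A <= Rabs b0 * d) by nra.
  unfold K in d2. nra.
Qed.

Lemma cont_eval e p : wfb e = true -> cont_at (eval e) p.
Proof.
  induction e; simpl; intro W.
  - intros eps He. exists 1. split. lra. intros. unfold Rminus. rewrite Rplus_opp_r, Rabs_R0. auto.
  - intros eps He. exists eps. split; auto. intros q Hq. apply Hq. apply Nat.ltb_lt; auto.
  - apply andb_true_iff in W as [W1 W2].
    apply (cont_comp2 Rplus); auto. intros eps He. exists (eps/2). split. lra.
    intros a b Ha Hb. replace (a + b - (eval e1 p + eval e2 p)) with ((a - eval e1 p) + (b - eval e2 p)) by ring.
    pose proof (Rabs_triang (a - eval e1 p) (b - eval e2 p)). lra.
  - apply andb_true_iff in W as [W1 W2].
    apply (cont_comp2 Rmult); auto. intros. apply mult_cont2; auto.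
  - apply (cont_comp1 Ropp); auto. apply derivable_continuous_pt. apply derivable_pt_opp. apply derivable_pt_id.
  - apply (cont_comp1 exp); auto. apply derivable_continuous_pt, derivable_pt_exp.
Qed.

Lemma smooth_coind (P : (Vec -> R) -> Prop) :
  (forall f, P f -> (forall p, cont_at f p) /\ (forall i p, (i < 4)%nat -> exists l, has_pd f i p l)
     /\ (forall i, (i < 4)%nat -> P (pd f i))) -> forall f, P f -> smooth f.
Proof.
  intros H. cofix CIH. intros f Pf. destruct (H f Pf) as [a [b c]].
  constructor; auto.
Qed.

Lemma smooth_eval_ext f e : wfb e = true -> (forall q, f q = eval e q) -> smooth f.
Proof.
  intros W Hf.
  apply (smooth_coind (fun f => exists e, wfb e = true /\ f = eval e)).
  2:{ exists e. split; auto. apply functional_extensionality; auto. }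
  clear. intros f [e [W ->]]. split; [|split].
  - intro p. apply cont_eval; auto.
  - intros i p _. eexists. apply has_pd_eval.
  - intros i _. exists (deriv e i). split. apply wfb_deriv; auto.
    apply functional_extensionality. intro p. apply pd_eval.
Qed.

Definition Mx (p : Vec) : Mat := fun i j =>
  let x := p 2%nat in let y := p 3%nat in let r := x ^ 2 + y ^ 2 in
  match i, j with
  | O, O => - r | O, S O => 1 | O, S (S O) => y | O, S (S (S O)) => - x
  | S O, O => -1 | S O, S O => 0 | S O, S (S O) => x | S O, S (S (S O)) => y
  | S (S O), O => - x - y * r | S (S O), S O => y | S (S O), S (S O) => y ^ 2
  | S (S O), S (S (S O)) => -1 - x * y
  | S (S (S O)), O => - y + x * r | S (S (S O)), S O => - x
  | S (S (S O)), S (S O) => 1 - x * y | S (S (S O)), S (S (S O)) => x ^ 2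
  | _, _ => 0 end.

Definition Dm (p : Vec) : Mat := fun i j =>
  let x := p 2%nat in let y := p 3%nat in exp (p 0%nat) *
  match i, j with
  | O, S O => -1 | O, S (S O) => - y - 2 * x | O, S (S (S O)) => x - 2 * y
  | S O, O => 1
  | S (S O), O => y + 2 * x | S (S O), S (S (S O)) => 2
  | S (S (S O)), O => - x + 2 * y | S (S (S O)), S (S O) => -2
  | _, _ => 0 end.
Definition Hm (p : Vec) : Mat := fun i j => sum4 (fun l => Dm p i l * Mx p l j).
Definition Hexp (p a b : Vec) : R := sum4 (fun i => sum4 (fun j => a i * b j * Hm p i j)).

Ltac reify q t :=
  lazymatch t with
  | q ?n => constr:(Var n)
  | ?a + ?b => let x := reify q a in let y := reify q b in constr:(Add x y)
  | ?a - ?b => let x := reify q a in let y := reify q b in constr:(Add x (Opp y))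
  | ?a * ?b => let x := reify q a in let y := reify q b in constr:(Mul x y)
  | - ?a => let x := reify q a in constr:(Opp x)
  | exp ?a => let x := reify q a in constr:(Ex x)
  | ?a ^ O => constr:(Cst 1)
  | ?a ^ (S ?m) => let x := reify q a in let y := reify q (a ^ m) in constr:(Mul x y)
  | _ => constr:(Cst t)
  end.

Ltac unf := cbv beta iota zeta delta [Zf Hf kf hf ppwave coord alpha sum4 Xf Yf Mx Dm Hm Hexp basis Nat.eqb Japply].


Ltac get_expr f :=
  let g := constr:(fun q : Vec => ltac:(let t := eval cbv beta iota zeta delta [Zf Hf kf hf ppwave coord alpha sum4 Xf Yf Mx Dm Hm Hexp basis Nat.eqb Japply] in (f q) in let r := reify q t in exact r)) in
  let e := eval cbv beta in (g vzero) in e.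

Ltac pd_step :=
  match goal with |- context [pd ?f ?i ?p] =>
    let e := get_expr f in
    rewrite (pd_eval_ext f e i p) by (intro; unf; cbn [eval]; ring)
  end; cbn [eval deriv Nat.eqb].

Ltac smooth_tac :=
  match goal with |- smooth ?f =>
    let e := get_expr f in
    apply (smooth_eval_ext f e); [reflexivity | intro; unf; cbn [eval]; ring] end.



Notation G := (grad ppwave (coord 0)).

Lemma gdot_pp p a b : gdot ppwave p a b =
  -(p 2%nat ^ 2 + p 3%nat ^ 2) * a 0%nat * b 0%nat + a 0%nat * b 1%nat + a 1%nat * b 0%nat
  + a 2%nat * b 2%nat + a 3%nat * b 3%nat.
Proof. unfold gdot, sum4, ppwave. ring. Qed.

Definition wsol (p : Vec) (a : nat -> R) : Vec := fun i =>
  match i with O => a 1%nat | S O => a 0%nat + (p 2%nat ^ 2 + p 3%nat ^ 2) * a 1%nat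
  | S (S O) => a 2%nat | S (S (S O)) => a 3%nat | _ => 0 end.

Lemma lt4 i : (i < 4)%nat -> i = 0%nat \/ i = 1%nat \/ i = 2%nat \/ i = 3%nat.
Proof. lia. Qed.

Lemma raise_pp p a : veq (raise ppwave p a) (wsol p a).
Proof.
  unfold raise.
  set (P := fun w : Vec => forall k, (k < 4)%nat -> sum4 (fun j => ppwave p j k * w j) = a k).
  assert (Hex : exists w, P w).
  { exists (wsol p a). intros k Hk. unfold sum4, ppwave, wsol.
    destruct (lt4 k Hk) as [ -> | [ -> | [ -> | -> ] ] ]; ring. }
  pose proof (epsilon_spec (inhabits vzero) P Hex) as Hs.
  set (w := epsilon _ P) in *. clearbody w.
  pose proof (Hs 0%nat ltac:(lia)) as H0. pose proof (Hs 1%nat ltac:(lia)) as H1.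
  pose proof (Hs 2%nat ltac:(lia)) as H2. pose proof (Hs 3%nat ltac:(lia)) as H3.
  cbv beta iota delta [sum4 ppwave] in H0, H1, H2, H3.
  assert (E0 : w 0%nat = a 1%nat) by lra. rewrite E0 in H0.
  intros i Hi. unfold wsol. destruct (lt4 i Hi) as [ -> | [ -> | [ -> | -> ] ] ]; lra.
Qed.

Lemma pd_coord0 k p : pd (coord 0) k p = if Nat.eqb 0 k then 1 else 0.
Proof. rewrite (pd_eval_ext _ (Var 0) k p) by reflexivity. reflexivity. Qed.

Lemma G_val p : veq (G p) (basis 1).
Proof.
  intros i Hi. unfold grad. rewrite raise_pp by auto. unfold wsol.
  rewrite !pd_coord0. unfold basis. destruct (lt4 i Hi) as [ -> | [ -> | [ -> | -> ] ] ]; simpl; ring.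
Qed.

Lemma G0 p : G p 0%nat = 0. Proof. rewrite G_val by lia. reflexivity. Qed.
Lemma G1 p : G p 1%nat = 1. Proof. rewrite G_val by lia. reflexivity. Qed.
Lemma G2 p : G p 2%nat = 0. Proof. rewrite G_val by lia. reflexivity. Qed.
Lemma G3 p : G p 3%nat = 0. Proof. rewrite G_val by lia. reflexivity. Qed.


Lemma inH_char p w : inH ppwave Zf G p w -> w 0%nat = 0 /\ w 1%nat = - p 3%nat * w 2%nat + p 2%nat * w 3%nat.
Proof.
  unfold inH. rewrite !gdot_pp, G0, G1, G2, G3. unfold Zf, Hf, kf, hf. intros [H1 H2].
  assert (E : w 0%nat = 0) by lra. split; auto. rewrite E in H1. lra.
Qed.

Lemma inH_intro p w : w 0%nat = 0 -> w 1%nat = - p 3%nat * w 2%nat + p 2%nat * w 3%nat -> inH ppwave Zf G p w.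
Proof. intros H0 H1. unfold inH. rewrite !gdot_pp, G0, G1, G2, G3, H0, H1. unfold Zf, Hf, kf, hf. split; ring. Qed.

Lemma frame_rot p e1 e2 : ON_frame ppwave Zf G p e1 e2 -> pos_frame (-1) Zf G p e1 e2 ->
  e1 0%nat = 0 /\ e1 1%nat = - p 3%nat * e1 2%nat + p 2%nat * e1 3%nat /\
  e2 0%nat = 0 /\ e2 1%nat = - p 3%nat * e2 2%nat + p 2%nat * e2 3%nat /\
  e2 2%nat = - e1 3%nat /\ e2 3%nat = e1 2%nat.
Proof.
  intros [He1 [He2 [N1 [N2 N3]]]] Pf.
  apply inH_char in He1 as [A0 A1]. apply inH_char in He2 as [B0 B1].
  rewrite gdot_pp, A0, A1 in N1. rewrite gdot_pp, B0, B1 in N2. rewrite gdot_pp, A0, A1, B0, B1 in N3.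
  unfold pos_frame, det4, det3 in Pf. rewrite G0, G1, G2, G3, A0, A1, B0, B1 in Pf. unfold Zf, Hf, kf, hf in Pf.
  set (a := e1 2%nat) in *. set (b := e1 3%nat) in *. set (c := e2 2%nat) in *. set (d := e2 3%nat) in *.
  assert (Na : a ^ 2 + b ^ 2 = 1) by lra. assert (Nc : c ^ 2 + d ^ 2 = 1) by lra.
  assert (Nac : a * c + b * d = 0) by lra.
  assert (Pd : 0 < a * d - b * c) by lra.
  assert (Id : (a * d - b * c) ^ 2 + (a * c + b * d) ^ 2 = (a ^ 2 + b ^ 2) * (c ^ 2 + d ^ 2)) by ring.
  rewrite Na, Nc, Nac in Id.
  assert (D1 : a * d - b * c = 1) by nra.
  assert (I1 : c * (a ^ 2 + b ^ 2) + b * (a * d - b * c) = a * (a * c + b * d)) by ring.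
  assert (I2 : d * (a ^ 2 + b ^ 2) - a * (a * d - b * c) = b * (a * c + b * d)) by ring.
  rewrite Na, D1, Nac in I1, I2.
  repeat split; auto; lra.
Qed.

Ltac dest4 i Hi := destruct (lt4 i Hi) as [ -> | [ -> | [ -> | -> ] ] ].

Lemma Mx_prop p : Jprop (-1) ppwave Zf G p (Mx p).
Proof.
  split; [|split].
  - intros i Hi. unfold Japply, sum4. rewrite G_val by auto. unfold Zf, Hf, kf, hf, basis.
    dest4 i Hi; cbn; ring.
  - intros i Hi. unfold Japply, sum4, vopp. rewrite G0, G1, G2, G3. unfold Zf, Hf, kf, hf.
    dest4 i Hi; cbn; ring.
  - intros e1 e2 Hon Hpos. destruct (frame_rot p e1 e2 Hon Hpos) as [A0 [A1 [B0 [B1 [B2 B3]]]]].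
    split; intros i Hi; unfold Japply, sum4, vopp; rewrite ?A0, ?A1, ?B0, ?B1, ?B2, ?B3;
    dest4 i Hi; cbn; rewrite ?A0, ?A1, ?B0, ?B1, ?B2, ?B3; ring.
Qed.

Lemma XY_frame p : ON_frame ppwave Zf G p (Xf p) (Yf p) /\ pos_frame (-1) Zf G p (Xf p) (Yf p).
Proof.
  split.
  - unfold ON_frame. rewrite !gdot_pp. unfold Xf, Yf, kf, hf.
    repeat split; try ring; apply inH_intro; unfold Xf, Yf, kf, hf; ring.
  - unfold pos_frame, det4, det3. rewrite G0, G1, G2, G3. unfold Zf, Xf, Yf, Hf, kf, hf. lra.
Qed.

Lemma Jprop_unique p M : Jprop (-1) ppwave Zf G p M ->
  forall i j, (i < 4)%nat -> (j < 4)%nat -> M i j = Mx p i j.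
Proof.
  intros [HZ [HG Hfr]]. destruct (XY_frame p) as [Hon Hpos].
  destruct (Hfr _ _ Hon Hpos) as [HX HY].
  intros i j Hi Hj.
  specialize (HZ i Hi). specialize (HG i Hi). specialize (HX i Hi). specialize (HY i Hi).
  unfold Japply, sum4, vopp in HZ, HG, HX, HY. rewrite G0, G1, G2, G3 in HG.
  rewrite G_val in HZ by auto. unfold Xf, Yf in HX, HY. cbv beta iota delta [Zf] in HZ.
  assert (E1 : M i 1%nat = - Zf p i) by lra.
  assert (E2 : M i 2%nat = Yf p i - kf p * M i 1%nat) by (unfold Yf; lra).
  assert (E3 : M i 3%nat = - Xf p i - hf p * M i 1%nat) by (unfold Xf; lra).
  assert (E0 : M i 0%nat = M i 1%nat * (/ 2 * (Hf p + kf p ^ 2 + hf p ^ 2)) + kf p * M i 2%nat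
     + hf p * M i 3%nat - basis 1 i) by lra.
  dest4 j Hj; rewrite ?E0, ?E2, ?E3, ?E1; unfold Zf, Xf, Yf, Hf, kf, hf, basis;
  dest4 i Hi; cbn; ring.
Qed.

Lemma Jmat_eq p i j : (i < 4)%nat -> (j < 4)%nat -> Jmat (-1) ppwave Zf G p i j = Mx p i j.
Proof.
  intros Hi Hj. apply Jprop_unique; auto. unfold Jmat.
  apply epsilon_spec. exists (Mx p). apply Mx_prop.
Qed.


Notation gKK := (gK (-1) ppwave Zf G exp (coord 0)).
Notation JJ := (Jmat (-1) ppwave Zf G).

Lemma gK_eq p a b : gKK p a b = Hexp p a b.
Proof.
  unfold gKK, gK, dform. unfold sum4 at 1. unfold sum4 at 1 2 3 4.
  repeat pd_step.
  unfold Japply, sum4. rewrite !Jmat_eq by lia.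
  unfold Hexp, Hm, Dm, Mx, sum4. ring.
Qed.

Lemma Jsq p w : veq (Japply (JJ p) (Japply (JJ p) w)) (vopp w).
Proof.
  intros i Hi. unfold Japply, sum4, vopp. rewrite !Jmat_eq by lia.
  dest4 i Hi; unfold Mx; cbn; ring.
Qed.

Lemma Jsmooth i j : (i < 4)%nat -> (j < 4)%nat -> smooth (fun p => JJ p i j).
Proof.
  intros Hi Hj. assert (E : (fun p => JJ p i j) = (fun p => Mx p i j)).
  { apply functional_extensionality. intro. apply Jmat_eq; auto. }
  rewrite E. dest4 i Hi; dest4 j Hj; smooth_tac.
Qed.

Lemma pdJ p i m c : (m < 4)%nat -> pd (fun q => Japply (JJ q) c m) i p = pd (fun q => Japply (Mx q) c m) i p.
Proof.
  intro Hm. apply pd_ext. intro q. unfold Japply, sum4. rewrite !Jmat_eq by lia. reflexivity.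
Qed.

Lemma pd_cst (c : R) i p : pd (fun _ => c) i p = 0.
Proof. apply pd_eq, has_pd_const. Qed.

Ltac pd_J :=
  repeat match goal with |- context [pd ?f ?i ?p] =>
    lazymatch f with context [Jmat] =>
      erewrite (pd_ext f _ i p) by (intro; cbv beta; rewrite !Jmat_eq by lia; reflexivity) end end.

Lemma Nij a b p : veq (nijenhuis JJ (fun _ => a) (fun _ => b) p) vzero.
Proof.
  intros m Hm. unfold nijenhuis, vsub, JF, bracket, vzero, Japply, sum4. cbv beta.
  dest4 m Hm; pd_J; rewrite ?pd_cst; repeat pd_step;
  rewrite !Jmat_eq by lia; unfold Mx; cbn; ring.
Qed.


Lemma h_bilin p a b : gKK p a b = sum4 (fun i => sum4 (fun j =>
       a i * b j * gKK p (basis i) (basis j))).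
Proof. unfold sum4. rewrite !gK_eq. unfold Hexp, sum4, basis. cbn. ring. Qed.

Lemma h_basis p i j : (i < 4)%nat -> (j < 4)%nat -> gKK p (basis i) (basis j) = Hm p i j.
Proof. intros Hi Hj. rewrite gK_eq. unfold Hexp, sum4, basis.
  dest4 i Hi; dest4 j Hj; cbn; ring. Qed.

Lemma h_smooth i j : (i < 4)%nat -> (j < 4)%nat -> smooth (fun p => gKK p (basis i) (basis j)).
Proof.
  intros Hi Hj. assert (E : (fun p => gKK p (basis i) (basis j)) = (fun p => Hm p i j)).
  { apply functional_extensionality. intro. apply h_basis; auto. }
  rewrite E. dest4 i Hi; dest4 j Hj; smooth_tac.
Qed.

Lemma h_sym p a b : gKK p a b = gKK p b a.
Proof. rewrite !gK_eq. unfold Hexp, Hm, Dm, Mx, sum4. cbn. ring. Qed.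

Lemma h_pos p a : Defs.nonzero a -> 0 < gKK p a a.
Proof.
  intros [i [Hi Ha]]. rewrite gK_eq.
  set (x := p 2%nat). set (y := p 3%nat).
  set (c1 := - a 0%nat). set (c3 := a 2%nat - y * a 0%nat). set (c4 := a 3%nat + x * a 0%nat).
  set (c2 := a 1%nat + y * c3 - x * c4).
  assert (E : Hexp p a a = exp (p 0%nat) * (c1 ^ 2 + c2 ^ 2 + 2 * c3 ^ 2 + 2 * c4 ^ 2)).
  { unfold c1, c2, c3, c4, x, y, Hexp, Hm, Dm, Mx, sum4. cbn. ring. }
  rewrite E. apply Rmult_lt_0_compat. apply exp_pos.
  destruct (Rle_or_lt (c1 ^ 2 + c2 ^ 2 + 2 * c3 ^ 2 + 2 * c4 ^ 2) 0) as [Hle|]; auto.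
  exfalso.
  assert (Z1 : c1 = 0) by nra. assert (Z2 : c2 = 0) by nra.
  assert (Z3 : c3 = 0) by nra. assert (Z4 : c4 = 0) by nra.
  unfold c1 in Z1. assert (A0 : a 0%nat = 0) by lra.
  unfold c3 in Z3. rewrite A0 in Z3. unfold c4 in Z4. rewrite A0 in Z4.
  unfold c2, c3, c4 in Z2. rewrite A0 in Z2.
  apply Ha. dest4 i Hi; nra.
Qed.

Lemma h_Jinv p a b : gKK p (Japply (JJ p) a) (Japply (JJ p) b) = gKK p a b.
Proof.
  rewrite !gK_eq. unfold Hexp, Japply, sum4. rewrite !Jmat_eq by lia.
  unfold Hm, Dm, Mx, sum4. cbn. ring.
Qed.

Lemma om_eq q j k : (j < 4)%nat -> (k < 4)%nat ->
  gKK q (Japply (JJ q) (basis j)) (basis k) = Dm q j k.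
Proof.
  intros Hj Hk. rewrite gK_eq. unfold Hexp, Japply, sum4. rewrite !Jmat_eq by lia.
  unfold Hm, Mx, sum4, basis. dest4 j Hj; dest4 k Hk; unfold Dm; cbn; ring.
Qed.

Lemma closed_om p i j k : (i < 4)%nat -> (j < 4)%nat -> (k < 4)%nat ->
  pd (fun q => gKK q (Japply (JJ q) (basis j)) (basis k)) i p
  + pd (fun q => gKK q (Japply (JJ q) (basis k)) (basis i)) j p
  + pd (fun q => gKK q (Japply (JJ q) (basis i)) (basis j)) k p = 0.
Proof.
  intros Hi Hj Hk.
  rewrite (pd_ext (fun q => gKK q (Japply (JJ q) (basis j)) (basis k)) (fun q => Dm q j k)) by (intro; apply om_eq; auto).
  rewrite (pd_ext (fun q => gKK q (Japply (JJ q) (basis k)) (basis i)) (fun q => Dm q k i)) by (intro; apply om_eq; auto).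
  rewrite (pd_ext (fun q => gKK q (Japply (JJ q) (basis i)) (basis j)) (fun q => Dm q i j)) by (intro; apply om_eq; auto).
  dest4 i Hi; dest4 j Hj; dest4 k Hk; repeat pd_step; ring.
Qed.

Lemma kahler_part : kahler JJ gKK.
Proof.
  split; [exact Jsmooth|]. split; [exact Jsq|]. split; [intros; apply Nij|].
  split; [exact h_bilin|]. split; [exact h_smooth|]. split; [exact h_sym|].
  split; [exact h_pos|]. split; [exact h_Jinv|].
  cbv zeta. intros. apply closed_om; auto.
Qed.


Lemma semi_pp : semi_riemannian ppwave.
Proof.
  split; [|split].
  - intros p i j. destruct i as [|[|[|[|i]]]]; destruct j as [|[|[|[|j]]]]; reflexivity.
  - intro p. unfold det4, det3, ppwave. cbn. lra.
  - intros i j Hi Hj. dest4 i Hi; dest4 j Hj; smooth_tac.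
Qed.

Lemma smooth_Z : smooth_field Zf.
Proof. intros i Hi. dest4 i Hi; smooth_tac. Qed.

Lemma smooth_G : smooth_field G.
Proof.
  intros i Hi. assert (E : (fun p => G p i) = (fun p => basis 1 i)).
  { apply functional_extensionality. intro. apply G_val; auto. }
  rewrite E. dest4 i Hi; smooth_tac.
Qed.

Lemma linind p : lin_indep (Zf p) (G p).
Proof.
  intros s t H. pose proof (H 0%nat ltac:(lia)) as H0. pose proof (H 1%nat ltac:(lia)) as H1.
  rewrite G0 in H0. rewrite G1 in H1. unfold Zf, Hf, kf, hf in H0, H1.
  assert (s = 0) by lra. subst. split; lra.
Qed.

Lemma posH p w : inH ppwave Zf G p w -> Defs.nonzero w -> 0 < gdot ppwave p w w.
Proof.
  intros Hin [i [Hi Hw]]. apply inH_char in Hin as [A0 A1].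
  rewrite gdot_pp, A0, A1.
  destruct (Rle_or_lt (w 2%nat ^ 2 + w 3%nat ^ 2) 0) as [Hle|Hlt].
  - exfalso. assert (w 2%nat = 0) by nra. assert (w 3%nat = 0) by nra.
    apply Hw. dest4 i Hi; auto; rewrite ?A1; nra.
  - nra.
Qed.

Lemma pd_spec f i p : (exists l, has_pd f i p l) -> has_pd f i p (pd f i p).
Proof. intros [l Hl]. rewrite (pd_eq f i p l Hl). exact Hl. Qed.

Lemma pdG p i m : (m < 4)%nat -> pd (fun q => G q m) i p = 0.
Proof.
  intro Hm. rewrite (pd_ext _ (fun _ => basis 1 m)) by (intro; apply G_val; auto).
  apply pd_cst.
Qed.

Lemma bracket_cond X : smooth_field X -> (forall p, inH ppwave Zf G p (X p)) ->
  forall p, inH ppwave Zf G p (bracket Zf X p) /\ inH ppwave Zf G p (bracket G X p).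
Proof.
  intros HX Hin p.
  assert (HX0 : forall q, X q 0%nat = 0) by (intro q; apply (inH_char q (X q)); auto).
  assert (HX1 : forall q, X q 1%nat = - q 3%nat * X q 2%nat + q 2%nat * X q 3%nat)
    by (intro q; apply (inH_char q (X q)); auto).
  assert (S2 : forall i, (i < 4)%nat -> has_pd (fun q => X q 2%nat) i p (pd (fun q => X q 2%nat) i p)).
  { intros i Hi. apply pd_spec. destruct (HX 2%nat ltac:(lia)) as [_ Hp _]. apply Hp; auto. }
  assert (S3 : forall i, (i < 4)%nat -> has_pd (fun q => X q 3%nat) i p (pd (fun q => X q 3%nat) i p)).
  { intros i Hi. apply pd_spec. destruct (HX 3%nat ltac:(lia)) as [_ Hp _]. apply Hp; auto. }
  assert (P0 : forall i, pd (fun q => X q 0%nat) i p = 0).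
  { intro i. rewrite (pd_ext _ (fun _ => 0)) by auto. apply pd_cst. }
  assert (P1 : forall i, (i < 4)%nat -> pd (fun q => X q 1%nat) i p =
     - (if Nat.eqb 3 i then 1 else 0) * X p 2%nat + - p 3%nat * pd (fun q => X q 2%nat) i p
     + ((if Nat.eqb 2 i then 1 else 0) * X p 3%nat + p 2%nat * pd (fun q => X q 3%nat) i p)).
  { intros i Hi. rewrite (pd_ext _ (fun q => - q 3%nat * X q 2%nat + q 2%nat * X q 3%nat)) by auto.
    apply pd_eq. apply has_pd_plus; apply has_pd_mult; auto.
    apply has_pd_opp, has_pd_coord. apply has_pd_coord. }
  split; apply inH_intro; unfold bracket, sum4;
    rewrite ?P0, ?P1 by lia; rewrite ?pdG by lia; repeat pd_step;
    rewrite ?G0, ?G1, ?G2, ?G3, ?HX0, ?HX1; unfold Zf, Hf, kf, hf; cbn [Nat.eqb]; ring.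
Qed.

Lemma gdot_raise p c w : gdot ppwave p (raise ppwave p c) w = sum4 (fun k => c k * w k).
Proof.
  rewrite gdot_pp. rewrite !raise_pp by lia. unfold wsol, sum4. ring.
Qed.

Lemma killing p v w : gdot ppwave p (nabla ppwave v Zf p) w + gdot ppwave p (nabla ppwave w Zf p) v = 0.
Proof.
  unfold nabla. rewrite !gdot_raise. unfold chr1, sum4. repeat pd_step.
  unfold ppwave, Zf, Hf, kf, hf. ring.
Qed.

Lemma nabG p v w : gdot ppwave p (nabla ppwave v G p) w = 0.
Proof.
  unfold nabla. rewrite !gdot_raise. unfold chr1, sum4. rewrite !pdG by lia. repeat pd_step.
  rewrite G0, G1, G2, G3. unfold ppwave. ring.
Qed.

Lemma nab0Z p e1 e2 v i : nabla0 ppwave Zf p e1 e2 v i = 0.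
Proof.
  unfold nabla0. cbv zeta. unfold sum2. cbn.
  pose proof (killing p e1 e1) as K11. pose proof (killing p e2 e2) as K22.
  assert (K21 : gdot ppwave p (nabla ppwave e2 Zf p) e1 = - gdot ppwave p (nabla ppwave e1 Zf p) e2)
    by (pose proof (killing p e1 e2); lra).
  assert (E11 : gdot ppwave p (nabla ppwave e1 Zf p) e1 = 0) by lra.
  assert (E22 : gdot ppwave p (nabla ppwave e2 Zf p) e2 = 0) by lra.
  rewrite K21, E11, E22. field.
Qed.

Lemma nab0G p e1 e2 v i : nabla0 ppwave G p e1 e2 v i = 0.
Proof.
  unfold nabla0. cbv zeta. unfold sum2. cbn. rewrite !nabG. field.
Qed.

Lemma admissible_part : admissible (-1) ppwave Zf G.
Proof.
  split; [exact semi_pp|]. split; [exact smooth_Z|]. split; [exact smooth_G|].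
  split; [exact linind|]. split; [exact posH|]. split; [exact bracket_cond|].
  split.
  { intros p e1 e2 v _ _ i Hi. unfold Japply, sum4. rewrite !nab0Z, !nab0G. ring. }
  split.
  { exists (fun _ => 1), (coord 0). split; [smooth_tac|]. split; [smooth_tac|].
    intros p i Hi. ring. }
  split.
  - intro p. exists 0, 0. intros i Hi. unfold grad. rewrite raise_pp by auto. unfold wsol.
    rewrite !(pd_ext (fun q => gdot ppwave q (Zf q) (G q)) (fun _ => -1))
      by (intro; rewrite gdot_pp, G0, G1, G2, G3; unfold Zf, Hf, kf, hf; ring).
    rewrite !pd_cst. dest4 i Hi; ring.
  - intro p. exists 0, 0. intros i Hi. unfold grad. rewrite raise_pp by auto. unfold wsol.
    rewrite !(pd_ext (fun q => gdot ppwave q (Zf q) (Zf q)) (fun _ => 0))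
      by (intro; rewrite gdot_pp; unfold Zf, Hf, kf, hf; field).
    rewrite !pd_cst. dest4 i Hi; ring.
Qed.


Theorem proposition10p1 :
  exists o : R, (o = 1 \/ o = -1) /\
    (forall p, veq (grad ppwave (coord 0) p) (basis 1)) /\
    (forall p, veq (Japply (Jmat o ppwave Zf (grad ppwave (coord 0)) p) (Xf p)) (Yf p)) /\
    admissible o ppwave Zf (grad ppwave (coord 0)) /\
    kahler (Jmat o ppwave Zf (grad ppwave (coord 0)))
           (gK o ppwave Zf (grad ppwave (coord 0)) exp (coord 0)).
Proof.
  exists (-1). split; [right; reflexivity|]. split; [exact G_val|]. split.
  - intros p i Hi. unfold Japply, sum4. rewrite !Jmat_eq by lia.
    unfold Xf, Yf, kf, hf. dest4 i Hi; unfold Mx; cbn; ring.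
  - split; [exact admissible_part | exact kahler_part].
Qed.
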